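(* Let $k\ge 2$ be an integer. For $n\ge 1$ let \[E_{n,k}=\frac{1}{k^n}\sum_{i=1}^n i\cdot \mathrm{IB}_k(n,i),\] the expected width of the largest BP-factorization of a uniformly random length-$n$ word over $\Sigma_k$, where $\mathrm{IB}_k(n,i)$ is the number of length-$n$ words over $\Sigma_k$ whose largest BP-factorization has width $i$. Then the limit $E_k=\lim_{n\to\infty}E_{n,k}$ exists.
   Context: $\Sigma_k=\{0,1,\ldots,k-1\}$. A block palindrome factorization (BP-factorization) of a word $w$ is a factorization $w=w_m\cdots w_1w_0w_1\cdots w_m$ with $m\ge 0$, $w_0$ a possibly empty word and $w_1,\dots,w_m$ non-empty words. Its width is $2m+1$ if $w_0$ is non-empty and $2m$ if $w_0$ is empty. A largest BP-factorization of $w$ is a BP-factorization of $w$ of maximum width. *)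

(* Defs.v *)
From HB Require Import structures.
From mathcomp Require Import all_boot all_order all_algebra.
From mathcomp Require Import all_classical all_reals all_analysis.
Set Implicit Arguments. Unset Strict Implicit. Unset Printing Implicit Defensive.
Import Order.TTheory GRing.Theory Num.Theory.

(* Words over Sigma_k = {0,...,k-1} are sequences of 'I_k. *)

(* A BP-factorization w = w_m ... w_1 w_0 w_1 ... w_m, represented by
   ws = [:: w_1; ...; w_m] (all non-empty) and the (possibly empty) centre w0. *)
Definition is_BPfact {T : eqType} (w : seq T) (ws : seq (seq T)) (w0 : seq T) : Prop :=
  all (fun u => u != [::]) ws /\ w = flatten (rev ws) ++ w0 ++ flatten ws.

Definition BPwidth {T : Type} (ws : seq (seq T)) (w0 : seq T) : nat :=
  (size ws).*2 + (if w0 is [::] then 0 else 1).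

Definition largest_BP_width {T : eqType} (w : seq T) (i : nat) : Prop :=
  (exists ws w0, is_BPfact w ws w0 /\ BPwidth ws w0 = i) /\
  (forall ws w0, is_BPfact w ws w0 -> BPwidth ws w0 <= i).

Definition IB (k n i : nat) : nat :=
  #|[set w : n.-tuple 'I_k | `[< largest_BP_width (tval w) i >]]|.

Local Open Scope ring_scope.
Definition E_nk {R : realType} (k n : nat) : R :=
  ((k ^ n)%:R)^-1 * \sum_(1 <= i < n.+1) (i%:R * (IB k n i)%:R).

(* Main.v *)
Require Import Defs.
From HB Require Import structures.
From mathcomp Require Import all_boot all_order all_algebra.
From mathcomp Require Import all_classical all_reals all_analysis.
Import Order.TTheory GRing.Theory Num.Theory.
Import numFieldNormedType.Exports.
From mathcomp Require Import zify ring lra.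
Set Implicit Arguments. Unset Strict Implicit. Unset Printing Implicit Defensive.

Section Border.
Variable T : eqType.
Implicit Types w u v z : seq T.

Definition brd a w : bool :=
  (0 < a) && (a.*2 <= size w) && (take a w == drop (size w - a) w).
Definition mid a w := drop a (take (size w - a) w).
Definition minb w : nat := head 0 [seq a <- iota 1 (size w) | brd a w].

Fixpoint Wf (f : nat) w : nat :=
  if f is f'.+1 then
    (if w is [::] then 0 else if minb w == 0 then 1 else (Wf f' (mid (minb w) w)).+2)
  else 0.
Definition W w := Wf (size w) w.

Lemma head_filter_iota (P : pred nat) m n :
  let h := head 0 [seq a <- iota m n | P a] in
  (h = 0 /\ forall c, m <= c < m + n -> ~~ P c) \/
  (m <= h < m + n /\ P h /\ forall c, m <= c < h -> ~~ P c).
Proof.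
elim: n m => [|n IH] m /=.
  by left; split=> // c; lia.
case Pm: (P m) => /=.
  by right; split; [lia | split=> // c; lia].
have [[-> H]|[H1 [H2 H3]]] := IH m.+1.
  left; split=> // c Hc.
  case: (c =P m) => [->|/eqP Hcm]; first by rewrite Pm.
  apply: H; lia.
right; split; first lia; split=> // c Hc.
case: (c =P m) => [->|/eqP Hcm]; first by rewrite Pm.
apply: H3; lia.
Qed.

Variant minb_spec w : nat -> Prop :=
| MinbNone of (forall c, ~~ brd c w) : minb_spec w 0
| MinbSome a of 0 < a & brd a w & (forall c, c < a -> ~~ brd c w) : minb_spec w a.

Lemma brd_range a w : brd a w -> 0 < a <= size w.
Proof. by case/andP=> /andP[H1 H2] _; lia. Qed.

Lemma minbP w : minb_spec w (minb w).
Proof.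
rewrite /minb.
have [[-> H]|[H1 [H2 H3]]] := head_filter_iota (brd^~ w) 1 (size w).
  constructor=> c; apply/negP=> Hc; have := brd_range Hc.
  move=> Hr; suff: ~~ brd c w by rewrite Hc.
  apply: H; lia.
constructor => //; first lia.
move=> c Hc; case: (posnP c) => [->|Hc0]; first by [].
apply: H3; lia.
Qed.

Lemma size_mid a w : size (mid a w) = size w - a.*2.
Proof. rewrite /mid size_drop size_take; case: ifP; lia. Qed.

Lemma Wf_fuel0 n : forall f1 f2 w, size w <= n -> size w <= f1 -> size w <= f2 ->
  Wf f1 w = Wf f2 w.
Proof.
elim: n => [|n IH] [|f1] [|f2] [|x w] //= H1 H2 H3; try lia.
case: (minbP (x :: w)) => // a Ha Hb _.
have := brd_range Hb; rewrite /= => Hr.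
have Hs := size_mid a (x :: w); rewrite /= in Hs.
by rewrite (IH f1 f2) //; lia.
Qed.

Lemma Wf_fuel f w : size w <= f -> Wf f w = W w.
Proof. by move=> H; apply: (@Wf_fuel0 (size w)). Qed.

Lemma W_eq w : W w = if w is [::] then 0 else
   if minb w == 0 then 1 else (W (mid (minb w) w)).+2.
Proof.
rewrite {1}/W; case: w => [|x w] //=.
case: (minbP (x :: w)) => // a Ha Hb _.
have := brd_range Hb; rewrite /= => Hr.
have Hs := size_mid a (x :: w); rewrite /= in Hs.
rewrite Wf_fuel //; lia.
Qed.

End Border.

Section Fact.
Variable T : eqType.
Implicit Types w u v z : seq T.

Lemma brd_nth x0 a w : brd a w -> forall i, i < a -> nth x0 w i = nth x0 w (size w - a + i).
Proof.
move=> Hb i Hi; have := brd_range Hb; case/andP: Hb => /andP[_ H2] /eqP E Hr.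
have := congr1 (fun s => nth x0 s i) E; rewrite /= nth_take // nth_drop //.
Qed.

Lemma nth_brd x0 a w : 0 < a -> a.*2 <= size w ->
  (forall i, i < a -> nth x0 w i = nth x0 w (size w - a + i)) -> brd a w.
Proof.
move=> H1 H2 H; rewrite /brd H1 H2 /=; apply/eqP.
apply: (eq_from_nth (x0 := x0)); first by rewrite size_take size_drop; case: ifP; lia.
move=> i; rewrite size_take; case: ifP => Ha Hi; last lia.
by rewrite nth_take // nth_drop H.
Qed.

Lemma no_overlap a b w : brd a w -> brd b w -> a < b ->
  (forall c, c < a -> ~~ brd c w) -> a.*2 <= b.
Proof.
move=> Ha Hb Hab Hmin; rewrite leqNgt; apply/negP => Hlt.
have := brd_range Ha; case: w Ha Hb Hmin => [|x0 w0]; first by move=> _ _ _ /=; lia.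
set w := x0 :: w0 => Ha Hb Hmin Hr.
have [Ha1 Ha2] : 0 < a /\ a.*2 <= size w by case/andP: Ha => /andP[-> ->].
have [Hb1 Hb2] : 0 < b /\ b.*2 <= size w by case/andP: Hb => /andP[-> ->].
have : brd (a.*2 - b) w.
  apply: (@nth_brd x0 (a.*2 - b) w); [lia|lia|] => i Hi.
  rewrite (brd_nth x0 Ha); last lia.
  have -> : size w - a + i = size w - b + (b - a + i) by lia.
  rewrite -(brd_nth x0 Hb); last lia.
  rewrite (brd_nth x0 Ha); last lia.
  congr nth; lia.
by apply/negP; apply: Hmin; lia.
Qed.

Lemma brd_split a w : brd a w -> w = take a w ++ mid a w ++ take a w.
Proof.
move=> Hb; have := brd_range Hb; case/andP: Hb => /andP[H1 H2] /eqP E Hr.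
rewrite {2}E /mid catA.
have -> : take a w = take a (take (size w - a) w) by rewrite take_takel //; lia.
by rewrite cat_take_drop cat_take_drop.
Qed.

Lemma mid_cat u m z : size z = size u -> mid (size u) (u ++ m ++ z) = m.
Proof.
move=> Hz; rewrite /mid !size_cat catA take_size_cat; last by rewrite size_cat; lia.
by rewrite drop_size_cat.
Qed.

Lemma brd_cat v M : v != [::] -> brd (size v) (v ++ M ++ v).
Proof.
move=> Hv; have Hv0 : 0 < size v by case: v Hv.
rewrite /brd Hv0 /=.
have -> : size (v ++ M ++ v) - size v = size (v ++ M) by rewrite !size_cat; lia.
rewrite take_size_cat // catA drop_size_cat // eqxx andbT !size_cat; lia.
Qed.


Lemma fact_ext M ws w0 u : is_BPfact M ws w0 -> u != [::] ->
  is_BPfact (u ++ M ++ u) (rcons ws u) w0.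
Proof.
case=> Hall HM Hu; split; first by rewrite all_rcons Hu Hall.
by rewrite rev_rcons flatten_rcons /= HM -!catA.
Qed.

Lemma width_rcons (ws : seq (seq T)) u w0 : BPwidth (rcons ws u) w0 = (BPwidth ws w0).+2.
Proof. by rewrite /BPwidth size_rcons doubleS. Qed.

Lemma minb_nil : minb ([::] : seq T) = 0.
Proof. by []. Qed.

Lemma W_some w : 0 < minb w -> W w = (W (mid (minb w) w)).+2.
Proof.
rewrite W_eq; case: w => [|x w] //= H.
by rewrite (_ : (minb (x :: w) == 0) = false) //; lia.
Qed.

Lemma W_exists w : exists ws w0, is_BPfact w ws w0 /\ BPwidth ws w0 = W w.
Proof.
move: (leqnn (size w)); move: {2}(size w) => n.
elim: n w => [|n IH] w Hs.
  case: w Hs => // _; exists [::], [::]; split => //.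
case: w Hs => [|x w1] Hs.
  by exists [::], [::].
set w := x :: w1; have {}Hs : size w <= n.+1 := Hs.
case: (posnP (minb w)) => Hm.
  exists [::], w; split; first by split => //=; rewrite cats0.
  by rewrite W_eq /= -/w Hm.
rewrite W_some //.
case: (minbP w) Hm => [//|a Ha Hb Hmin _].
have := brd_range Hb => Hr.
have Hsm : size (mid a w) <= n.
  rewrite size_mid.
  lia.
have [ws [w0 [[Hall Hw] Hwd]]] := IH (mid a w) Hsm.
exists (rcons ws (take a w)), w0; split; last by rewrite width_rcons Hwd.
rewrite {1}(brd_split Hb); apply: fact_ext; first by split.
by rewrite -size_eq0 size_take; case: ifP; lia.
Qed.

Lemma W_upper w ws w0 : is_BPfact w ws w0 -> BPwidth ws w0 <= W w.
Proof.
move: (leqnn (size w)); move: {2}(size w) => n.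
elim: n w ws w0 => [|n IH] w ws w0 Hs [Hall Hw].
  case: w Hs Hw => // _; case/lastP: ws Hall => [|ws v] /=.
    by case: w0.
  rewrite rev_rcons flatten_rcons all_rcons /= => /andP[Hv _].
  by case: v Hv.
case/lastP: ws Hall Hw => [|ws v] Hall Hw.
  rewrite /= cats0 in Hw; subst w0.
  rewrite /BPwidth W_eq; case: w {Hs} => //= x w; case: ifP => //.
move: Hall; rewrite all_rcons => /andP[Hv Hall].
set M := flatten (rev ws) ++ w0 ++ flatten ws.
have HM : is_BPfact M ws w0 by [].
have Hw' : w = v ++ M ++ v by rewrite Hw /M rev_rcons flatten_rcons /= -!catA.
have HbB : brd (size v) w by rewrite Hw'; apply: brd_cat.
rewrite W_some; last by case: (minbP w) HbB => // Hn; rewrite (negbTE (Hn _)).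
case: (minbP w) => [Hn|a Ha Hba Hmin]; first by rewrite (negbTE (Hn _)) in HbB.
rewrite width_rcons ltnS ltnS.
have Hab : a <= size v.
  by rewrite leqNgt; apply/negP => H; move: (Hmin _ H); rewrite HbB.
have Hsw : size w = (size v).*2 + size M by rewrite Hw' !size_cat; lia.
case: (a =P size v) => [Ea | /eqP Nab].
  rewrite Ea Hw' mid_cat //; apply: IH => //; lia.
have Hlt : a < size v by lia.
have H2a := no_overlap Hba HbB Hlt Hmin.
have Hbv : brd a v.
  rewrite /brd Ha H2a /=.
  case/andP: Hba => _ /eqP E.
  move: E; rewrite Hw' takel_cat // catA drop_cat size_cat.
  rewrite ifN; last lia.
  rewrite -size_cat -catA.
  have -> : size (v ++ M ++ v) - a - size (v ++ M) = size v - a by rewrite !size_cat; lia.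
  by move=> ->.
set u := take a v; set y := mid a v.
have Hv' : v = u ++ y ++ u := brd_split Hbv.
have Hsu : size u = a by rewrite /u size_takel //; lia.
have Hmid : mid a w = y ++ (u ++ M ++ u) ++ y.
  rewrite Hw' {1 2}Hv' -Hsu.
  have -> : (u ++ y ++ u) ++ M ++ u ++ y ++ u = u ++ (y ++ (u ++ M ++ u) ++ y) ++ u by rewrite -!catA.
  by rewrite mid_cat.
have Hu : u != [::] by rewrite -size_eq0 Hsu; lia.
have Hf1 := fact_ext HM Hu.
have Hsmid : size (mid a w) <= n by rewrite size_mid; lia.
rewrite Hmid in Hsmid *.
case: (y =P [::]) => [Ey | /eqP Ny].
  rewrite Ey /= cats0 in Hsmid *.
  apply: leq_trans (IH _ _ _ Hsmid Hf1); rewrite width_rcons; lia.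
have Hf2 := fact_ext Hf1 Ny.
apply: leq_trans (IH _ _ _ Hsmid Hf2); rewrite !width_rcons; lia.
Qed.

End Fact.


Section Gen.
Variable T : eqType.
Notation word := (seq T).
Definition unb (u : word) : bool :=
  all (fun c => take c u != drop (size u - c) u) (iota 1 (size u).-1).

Lemma brd_cat3 (u m z : word) c : size u = size z -> c <= size u ->
  brd c (u ++ m ++ z) = (0 < c) && (take c u == drop (size u - c) z).
Proof.
move=> Hz Hc; rewrite /brd takel_cat // catA drop_cat !size_cat.
rewrite ifN; last lia.
have -> : size u + size m + size z - c - (size u + size m) = size u - c by lia.
have -> : c.*2 <= size u + size m + size z by lia.
by rewrite andbT.
Qed.

Lemma minb_eq (w : word) a : 0 < a ->
  (minb w == a) = brd a w && all (fun c => ~~ brd c w) (iota 0 a).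
Proof.
move=> Ha; case: (minbP w) => [Hn|a' Ha' Hb Hmin].
  by rewrite (negbTE (Hn a)); case: a Ha.
case: (a' =P a) => [<-|/eqP Na].
  rewrite Hb /=; symmetry; apply/allP => c; rewrite mem_iota => Hc.
  apply: Hmin; lia.
symmetry; apply/negbTE/negP => /andP[Hba /allP Hall].
case: (ltngtP a' a) => H.
- by move: (Hall a'); rewrite mem_iota Hb => /(_ ltac:(lia)).
- by move: (Hmin a H); rewrite Hba.
- by move: Na; rewrite H eqxx.
Qed.

Lemma minb_cat3 (u m z : word) : size u = size z -> 0 < size u ->
  (minb (u ++ m ++ z) == size u) = (z == u) && unb u.
Proof.
move=> Hz Hu; rewrite minb_eq // brd_cat3 // Hu subnn drop0 take_size /=.
case: (z =P u) => [Ez|Nz] /=; last by case: (u =P z) => // E; rewrite E in Nz.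
subst z; rewrite eqxx /=.
have Ei : iota 0 (size u) = 0 :: iota 1 (size u).-1 by case: (size u) Hu.
rewrite Ei /unb /=; apply: eq_in_all => c; rewrite mem_iota => Hc.
rewrite brd_cat3 //; last lia.
by rewrite (_ : 0 < c) //; lia.
Qed.

End Gen.

Section Count.
Variable k : nat.
Notation word := (seq 'I_k).

Fixpoint words n : seq word :=
  if n is n'.+1 then [seq c :: w | c <- enum 'I_k, w <- words n'] else [:: [::]].

Lemma mem_words n w : (w \in words n) = (size w == n).
Proof.
elim: n w => [|n IH] [|c w] //=.
  by apply/allpairsP => -[[c' w'] /= [_ _]].
apply/allpairsP/idP => [[[c' w'] /= [_ Hw E]]|Hs].
  by case: E => _ ->; rewrite eqSS -IH.
by exists (c, w); rewrite mem_enum IH.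
Qed.

Lemma uniq_words n : uniq (words n).
Proof.
elim: n => [|n IH] //=; apply: allpairs_uniq => //; first exact: enum_uniq.
by move=> [c w] [c' w'] _ _ /= [-> ->].
Qed.

Lemma size_words n : size (words n) = k ^ n.
Proof.
elim: n => [|n IH] //=; by rewrite size_allpairs size_enum_ord IH expnS.
Qed.

Lemma sum_words_cons n (F : word -> nat) :
  \sum_(w <- words n.+1) F w = \sum_(c <- enum 'I_k) \sum_(w <- words n) F (c :: w).
Proof. by rewrite /= big_allpairs_dep. Qed.

Lemma sum_words_cat p q (F : word -> nat) :
  \sum_(w <- words (p + q)) F w = \sum_(x <- words p) \sum_(y <- words q) F (x ++ y).
Proof.
elim: p F => [|p IH] F; first by rewrite big_seq1.
rewrite addSn sum_words_cons sum_words_cons.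
by apply: eq_bigr => c _; rewrite IH.
Qed.

Lemma sum_words_eq a u (F : word -> nat) : u \in words a ->
  \sum_(z <- words a) (z == u) * F z = F u.
Proof.
move=> Hu; rewrite (bigD1_seq u) //= ?uniq_words // eqxx mul1n big1 ?addn0 //.
by move=> z /negbTE ->.
Qed.

Definition B a := \sum_(u <- words a) (unb u : nat).

Lemma mid_cat3 (u m z : word) : size z = size u -> mid (size u) (u ++ m ++ z) = m.
Proof. exact: mid_cat. Qed.

Lemma sum_minb n a (f : word -> nat) : 0 < a -> a.*2 <= n ->
  \sum_(w <- words n) (minb w == a) * f (mid a w) = B a * \sum_(m <- words (n - a.*2)) f m.
Proof.
move=> Ha Hn.
have En : n = a + ((n - a.*2) + a) by lia.
rewrite {1}En sum_words_cat /B big_distrl /= big_seq [RHS]big_seq.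
apply: eq_bigr => u; rewrite mem_words => /eqP Hu.
rewrite big_distrr /=.
rewrite sum_words_cat; apply: eq_bigr => m _.
transitivity (\sum_(z <- words a) (z == u) * (unb u * f m)).
  rewrite big_seq [RHS]big_seq; apply: eq_bigr => z; rewrite mem_words => /eqP Hz.
  have Hzu : size z = size u by rewrite Hz Hu.
  have Hu0 : 0 < size u by rewrite Hu.
  rewrite -Hu minb_cat3 // mid_cat3 //.
  by case: (z == u); case: (unb u); rewrite /= ?mul0n ?mul1n.
by rewrite (@sum_words_eq a u (fun _ => unb u * f m)) // mem_words Hu.
Qed.

Definition Ssum n := \sum_(w <- words n) W w.

Lemma W_sum (w : word) : 0 < size w ->
  W w = 1 + \sum_(1 <= a < (size w).+1) (minb w == a) * (1 + W (mid a w)).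
Proof.
rewrite W_eq; case: w => // x w _.
case: (minbP (x :: w)) => [Hn|a Ha Hb Hmin].
  by rewrite big_nat big1 // => i /andP[Hi _]; rewrite (_ : (0 == i) = false) //; lia.
rewrite (_ : (a == 0) = false); last lia.
have Hr := brd_range Hb.
have Hr' : 1 <= a < (size w).+2 by move: Hr => /=; lia.
rewrite (bigD1_seq a) ?mem_index_iota ?iota_uniq // eqxx mul1n big1 ?addn0 //; first by rewrite /= addn0 add1n.
by move=> i /negbTE; rewrite eq_sym => ->.
Qed.

Lemma S_rec n : 0 < n ->
  Ssum n = k ^ n + \sum_(1 <= a < n.+1) (a.*2 <= n) * (B a * (k ^ (n - a.*2) + Ssum (n - a.*2))).
Proof.
move=> Hn; rewrite /Ssum big_seq.
rewrite (eq_bigr (fun w => 1 + \sum_(1 <= a < n.+1) (minb w == a) * (1 + W (mid a w)))); last first.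
  by move=> w; rewrite mem_words => /eqP Hw; rewrite W_sum Hw.
rewrite big_split /= -big_seq sum1_size size_words; congr (_ + _).
rewrite -big_seq exchange_big /=; apply: eq_big_seq => a; rewrite mem_index_iota => Ha.
case: (leqP a.*2 n) => H2 /=.
  rewrite mul1n (@sum_minb n a (fun m => 1 + W m)); [|lia|lia].
  by rewrite big_split /= sum1_size size_words.
rewrite mul0n big1_seq // => w /andP[_]; rewrite mem_words => /eqP Hw.
case: (minbP w) => [_|b Hb Hbb _]; first by case: (a) Ha.
case/andP: Hbb => /andP[_ H] _.
rewrite (_ : (b == a) = false) //; apply/negbTE/eqP => E; subst b.
move: H; rewrite Hw; lia.
Qed.

End Count.


Section Sz.
Variable T : eqType.
Lemma W_le_size (w : seq T) : W w <= size w.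
Proof.
move: (leqnn (size w)); move: {2}(size w) => n.
elim: n w => [|n IH] w Hs; first by case: w Hs.
rewrite W_eq; case: w Hs => // x w Hs.
case: (minbP (x :: w)) => [_|a Ha Hb _] //=.
have Hr := brd_range Hb.
have Hm := size_mid a (x :: w).
move: Hr Hm Hs => /= Hr Hm Hs.
have Hs' : size (mid a (x :: w)) <= n by rewrite Hm; lia.
have := IH _ Hs'.
rewrite (_ : (a == 0) = false); last lia.
have H2 : a.*2 <= (size w).+1 by case/andP: Hb => /andP[_ ->].
lia.
Qed.

Lemma W_pos (w : seq T) : 0 < size w -> 0 < W w.
Proof. by rewrite W_eq; case: w => // x w _; case: ifP. Qed.
End Sz.

Section Bd.
Variable k : nat.

Lemma sum_neq (x : 'I_k) : \sum_(c <- enum 'I_k) (c != x : nat) = k.-1.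
Proof.
rewrite big_enum /= -big_mkcondr /= sum1_card.
have := cardC1 x; rewrite card_ord => <-.
by apply: eq_card => i.
Qed.

Lemma B_le a : B k a <= k ^ a.
Proof.
rewrite /B -size_words -sum1_size; apply: leq_sum => u _; by case: (unb u).
Qed.

Lemma drop_size_last (T : eqType) (x : T) s : drop (size s) (x :: s) = [:: last x s].
Proof. by elim: s x => [|y s IH] x //=. Qed.

Lemma B_le2 a : 0 < a -> B k a.+1 <= k.-1 * k ^ a.
Proof.
move=> Ha; rewrite /B sum_words_cons.
apply: (@leq_trans (\sum_(c <- enum 'I_k) \sum_(w <- words k a) (c != last c w : nat))).
  apply: leq_sum => c _; rewrite big_seq [X in _ <= X]big_seq.
  apply: leq_sum => w; rewrite mem_words => /eqP Hw.
  case: (c =P last c w) => [E|_]; last by case: (unb _).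
  rewrite /unb /=; case: w Hw E => [|y w] /= Hw E; first lia.
  by rewrite drop_size_last E eqxx.
rewrite exchange_big /= big_seq (eq_bigr (fun _ => k.-1)); last first.
  move=> w; rewrite mem_words => /eqP Hw; case: w Hw => [|y w] /= Hw; first lia.
  by rewrite -(sum_neq (last y w)).
by rewrite -big_seq big_const_seq count_predT size_words iter_addn_0 mulnC.
Qed.
End Bd.


Section Conv.
Local Open Scope ring_scope.
Variable R : archiFieldType.
Variables (e p : nat -> R).
Hypothesis p_ge0 : forall a, 0 <= p a.
Hypothesis p_le : forall a, p a <= (2 ^+ a)^-1.
Hypothesis p_sum : forall M, \sum_(1 <= a < M) p a <= 3/4.
Hypothesis e0 : e 0 = 0.
Definition tterm n a := (a.*2 <= n)%N%:R * (p a * (1 + e (n - a.*2))).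
Hypothesis e_rec : forall n, (0 < n)%N -> e n = 1 + \sum_(1 <= a < n.+1) tterm n a.

Lemma e_bound n : 0 <= e n <= 7.
Proof.
elim/ltn_ind: n => n IH.
case: (posnP n) => [->|Hn]; first by rewrite e0 lexx ler0n.
have H1 : forall a, (0 < a)%N -> 0 <= tterm n a <= 8 * p a.
  move=> a Ha; rewrite /tterm; case: (leqP a.*2 n) => H /=.
    have /andP[h1 h2] := IH (n - a.*2)%N ltac:(lia).
    have := p_ge0 a => hp.
    rewrite mul1r; apply/andP; split; first by apply: mulr_ge0; lra.
    rewrite mulrC; apply: ler_wpM2r => //; lra.
  by rewrite mul0r lexx /=; apply: mulr_ge0 => //; have := p_ge0 a; lra.
have Hs1 : 0 <= \sum_(1 <= a < n.+1) tterm n a.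
  rewrite big_nat; apply: sumr_ge0 => a /andP[Ha _].
  by case/andP: (H1 a Ha).
have Hs2 : \sum_(1 <= a < n.+1) tterm n a <= 8 * \sum_(1 <= a < n.+1) p a.
  rewrite mulr_sumr big_nat [X in _ <= X]big_nat; apply: ler_sum => a /andP[Ha _].
  by case/andP: (H1 a Ha).
have := p_sum n.+1.
rewrite e_rec //; lra.
Qed.

Lemma geo_tail N j : \sum_(N <= a < N + j) (2 ^+ a)^-1 = 2 * (2 ^+ N)^-1 - 2 * (2 ^+ (N + j))^-1 :> R.
Proof.
elim: j => [|j IH]; first by rewrite addn0 big_geq // subrr.
rewrite addnS big_nat_recr /=; last lia.
rewrite IH exprS invfM.
set x := (2 ^+ (N + j))^-1.
have -> : (2:R)^-1 = 1/2 by rewrite div1r.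
lra.
Qed.

Lemma tail_bound n N : (N < n)%N ->
  0 <= \sum_(N.+1 <= a < n.+1) tterm n a <= 8 * (2 ^+ N)^-1.
Proof.
move=> HN.
have H1 : forall a, (0 < a)%N -> 0 <= tterm n a <= 8 * (2 ^+ a)^-1.
  move=> a Ha; rewrite /tterm; case: (leqP a.*2 n) => H /=.
    have /andP[h1 h2] := e_bound (n - a.*2)%N.
    have := p_ge0 a => hp; have := p_le a => hp2.
    rewrite mul1r; apply/andP; split; first by apply: mulr_ge0; lra.
    have : p a * (1 + e (n - a.*2)%N) <= p a * 8 by apply: ler_wpM2l => //; lra.
    move=> hh; apply: (le_trans hh); rewrite mulrC; apply: ler_wpM2l => //.
  rewrite mul0r lexx /=; apply: mulr_ge0 => //; rewrite invr_ge0 exprn_ge0 //.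
apply/andP; split.
  rewrite big_nat; apply: sumr_ge0 => a /andP[Ha _].
  by case/andP: (H1 a ltac:(lia)).
apply: (@le_trans _ _ (8 * \sum_(N.+1 <= a < n.+1) (2 ^+ a)^-1)).
  rewrite mulr_sumr big_nat [X in _ <= X]big_nat; apply: ler_sum => a /andP[Ha _].
  by case/andP: (H1 a ltac:(lia)).
have -> : n.+1 = (N.+1 + (n - N))%N by lia.
rewrite geo_tail exprS invfM.
have : 0 <= (2 ^+ (N.+1 + (n - N)))^-1 :> R by rewrite invr_ge0 exprn_ge0.
set x := (2 ^+ (N.+1 + (n - N)))^-1; set y := (2 ^+ N)^-1.
have -> : (2:R)^-1 = 1/2 by rewrite div1r.
lra.
Qed.


Lemma e_split n N : (N.*2 < n)%N ->
  e n = 1 + \sum_(1 <= a < N.+1) (p a * (1 + e (n - a.*2))) + \sum_(N.+1 <= a < n.+1) tterm n a.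
Proof.
move=> HN; rewrite e_rec; last lia.
rewrite (big_cat_nat _ (n := N.+1)); [|lia|lia].
rewrite addrA; congr (_ + _ + _).
rewrite !big_nat; apply: eq_bigr => a /andP[Ha1 Ha2].
by rewrite /tterm (_ : (a.*2 <= n)%N); [rewrite mul1r | lia].
Qed.

Lemma step T (d : R) N : (forall n m, (T <= n)%N -> (T <= m)%N -> `|e n - e m| <= d) ->
  forall n m, (T + (N.*2).+1 <= n)%N -> (T + (N.*2).+1 <= m)%N ->
  `|e n - e m| <= 3/4 * d + 8 * (2 ^+ N)^-1.
Proof.
move=> HT n m Hn Hm.
have d0 : 0 <= d by have := HT T T (leqnn _) (leqnn _); rewrite subrr normr0.
have /andP[tn1 tn2] := tail_bound (n := n) (N := N) ltac:(lia).
have /andP[tm1 tm2] := tail_bound (n := m) (N := N) ltac:(lia).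
have HD : `|\sum_(1 <= a < N.+1) (p a * (1 + e (n - a.*2))) -
            \sum_(1 <= a < N.+1) (p a * (1 + e (m - a.*2)))| <= 3/4 * d.
  rewrite -sumrB; apply: (le_trans (ler_norm_sum _ _ _)).
  apply: (@le_trans _ _ (\sum_(1 <= a < N.+1) (p a * d))).
    rewrite !big_nat; apply: ler_sum => a /andP[Ha1 Ha2].
    rewrite -mulrBr normrM ger0_norm // ler_wpM2l //.
    have -> : 1 + e (n - a.*2)%N - (1 + e (m - a.*2)%N) = e (n - a.*2)%N - e (m - a.*2)%N by ring.
    apply: HT; lia.
  by rewrite -mulr_suml ler_wpM2r // p_sum.
rewrite (e_split (N := N)); last lia.
rewrite [e m](e_split (N := N)); last lia.
move: HD tn1 tn2 tm1 tm2 d0; rewrite !ler_norml.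
set A := \sum_(1 <= a < N.+1) _; set B := \sum_(1 <= a < N.+1) _.
set tn := \sum_(N.+1 <= a < n.+1) _; set tm := \sum_(N.+1 <= a < m.+1) _.
set y := (2 ^+ N)^-1.
move=> /andP[h1 h2] *; apply/andP; split; lra.
Qed.

Lemma iter_bound N j : forall n m, (j * (N.*2).+1 <= n)%N -> (j * (N.*2).+1 <= m)%N ->
  `|e n - e m| <= 7 * (3/4) ^+ j + 32 * (2 ^+ N)^-1.
Proof.
elim: j => [|j IH] n m Hn Hm.
  have /andP[a1 a2] := e_bound n; have /andP[b1 b2] := e_bound m.
  have : 0 <= (2 ^+ N)^-1 :> R by rewrite invr_ge0 exprn_ge0.
  rewrite expr0 ler_norml; set y := (2 ^+ N)^-1 => hy; apply/andP; split; lra.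
apply: le_trans (step (N := N) IH (n := n) (m := m) _ _) _; [nia|nia|].
rewrite exprS; set y := (2 ^+ N)^-1; set z := (3/4) ^+ j.
lra.
Qed.

Lemma pow34 j : (3/4:R) ^+ j * (1 + j%:R / 3) <= 1.
Proof.
have key : forall x t : R, 0 <= x -> 0 <= x * t -> x * (1 + t/3) <= 1 ->
   3/4 * x * (1 + (t + 1)/3) <= 1 by move=> x t *; lra.
elim: j => [|j IH]; first by rewrite expr0 mul1r mul0r addr0.
have hx : 0 <= (3/4:R) ^+ j by apply: exprn_ge0; lra.
have hj : 0 <= (3/4:R) ^+ j * j%:R by apply: mulr_ge0.
have -> : (j.+1)%:R = j%:R + 1 :> R by rewrite natr1.
rewrite exprS; exact: key.
Qed.

Lemma e_cauchy (eps : R) : 0 < eps -> exists T, forall n, (T <= n)%N -> `|e T - e n| < eps.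
Proof.
move=> he.
pose N := Num.bound (128 / eps).
pose j := Num.bound (84 / eps).
have hN : 128 / eps < N%:R by apply: archi_boundP; apply: divr_ge0 => //; lra.
have hj : 84 / eps < j%:R by apply: archi_boundP; apply: divr_ge0 => //; lra.
exists (j * (N.*2).+1)%N => n Hn.
apply: le_lt_trans (iter_bound (leqnn _) Hn) _.
have h2N : (N.+1)%:R <= (2 ^+ N : R).
  by rewrite -natrX ler_nat; apply: ltn_expl.
have h0 : 0 < (2 ^+ N : R) by rewrite exprn_gt0.
have hyz : (2 ^+ N : R)^-1 * 2 ^+ N = 1 by rewrite mulVf // gt_eqF.
have hy0 : 0 < (2 ^+ N : R)^-1 by rewrite invr_gt0.
have hN' : 128 < N%:R * eps by rewrite -ltr_pdivrMr.
have hj' : 84 < j%:R * eps by rewrite -ltr_pdivrMr.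
have hx := pow34 j.
have hx0 : 0 <= (3/4:R) ^+ j by apply: exprn_ge0; lra.
rewrite -natr1 in h2N.
move: h2N hyz hy0 hN' hj' hx hx0.
set y := (2 ^+ N : R)^-1; set P := (2 ^+ N : R); set x := (3/4:R) ^+ j.
set zN := (N%:R : R); set zj := (j%:R : R) => h2N hyz hy0 hN' hj' hx hx0.
have q1 : 0 <= y * (P - (zN + 1)) by apply: mulr_ge0; lra.
have p1 : 0 < (eps * (zN + 1) - 128) * y by apply: mulr_gt0; lra.
have p2 : 0 <= eps * (1 - y * (zN + 1)) by apply: mulr_ge0; lra.
have p3 : 0 <= (eps * zj - 84) * x by apply: mulr_ge0; lra.
have p4 : 0 <= eps * (1 - x * (1 + zj / 3)) by apply: mulr_ge0; lra.
have p5 : 0 <= eps * x by apply: mulr_ge0; lra.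
lra.
Qed.

End Conv.


Section Real.
Local Open Scope ring_scope.
Variable R : archiFieldType.
Variable k : nat.
Hypothesis hk : (1 < k)%N.

Definition ee n : R := (Ssum k n)%:R / (k ^ n)%:R.
Definition pp a : R := (B k a)%:R / (k ^ a.*2)%:R.

Let K : R := k%:R.
Let r : R := K^-1.
Lemma K_gt0 : 0 < K. Proof. by rewrite ltr0n; lia. Qed.
Lemma K_ge2 : 2 <= K. Proof. by rewrite /K ler_nat. Qed.
Lemma Kr : K * r = 1. Proof. by rewrite mulfV // gt_eqF // K_gt0. Qed.
Lemma r_ge0 : 0 <= r. Proof. by rewrite invr_ge0 ltW // K_gt0. Qed.
Lemma r_le : r <= 1/2.
Proof.
have := Kr; have := K_ge2; have := r_ge0; move=> h1 h2 h3; nra.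
Qed.

Lemma natX n : (k ^ n)%:R = K ^+ n. Proof. by rewrite natrX. Qed.

Lemma pp_eq a : pp a = (B k a)%:R * r ^+ a.*2.
Proof. by rewrite /pp natX exprVn. Qed.

Lemma pp_ge0 a : 0 <= pp a.
Proof. by rewrite pp_eq mulr_ge0 // exprn_ge0 // r_ge0. Qed.

Lemma Kr_pow n : K ^+ n * r ^+ n = 1.
Proof. by rewrite -exprMn Kr expr1n. Qed.

Lemma pp_le a : pp a <= r ^+ a.
Proof.
rewrite pp_eq -addnn exprD mulrA.
have hB : (B k a)%:R <= K ^+ a by rewrite -natX ler_nat B_le.
have h0 : 0 <= r ^+ a by rewrite exprn_ge0 // r_ge0.
apply: (@le_trans _ _ (K ^+ a * r ^+ a * r ^+ a)).
  by rewrite ler_wpM2r // ler_wpM2r.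
by rewrite Kr_pow mul1r.
Qed.

Lemma pp_le2 : (2 ^+ 0)^-1 = 1 :> R.
Proof. by rewrite expr0 invr1. Qed.

Lemma pp_le_half a : pp a <= (2 ^+ a)^-1.
Proof.
apply: le_trans (pp_le a) _.
rewrite -exprVn; apply: lerXn2r; rewrite ?nnegrE ?invr_ge0 ?r_ge0 //.
by have := r_le; rewrite div1r.
Qed.

Lemma pp_le3 b : (0 < b)%N -> pp b.+1 <= r ^+ b.+1 - r ^+ b.+2.
Proof.
move=> hb; rewrite pp_eq.
have hB : (B k b.+1)%:R <= (K - 1) * K ^+ b.
  have := B_le2 k hb; rewrite -(ler_nat R) natrM natX => /le_trans; apply.
  apply: ler_wpM2r; first by rewrite exprn_ge0 // ltW // K_gt0.
  rewrite -subn1 natrB ?lexx //; lia.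
have h0 : 0 <= r ^+ (b.+1).*2 by rewrite exprn_ge0 // r_ge0.
apply: (@le_trans _ _ ((K - 1) * K ^+ b * r ^+ (b.+1).*2)); first by rewrite ler_wpM2r.
have -> : (b.+1).*2 = (b + b.+2)%N by lia.
rewrite exprD mulrA -[_ * K ^+ b * _]mulrA Kr_pow mulr1 mulrBl mul1r.
have -> : K * r ^+ b.+2 = r ^+ b.+1 by rewrite exprS mulrA Kr mul1r.
by [].
Qed.


Lemma tele j : \sum_(2 <= a < j.+2) pp a <= r ^+ 2 - r ^+ j.+2.
Proof.
elim: j => [|j IH]; first by rewrite big_geq // subrr.
rewrite big_nat_recr /=; last lia.
have := pp_le3 (b := j.+1) isT; lra.
Qed.

Lemma pp_sum M : \sum_(1 <= a < M) pp a <= 3/4.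
Proof.
case: M => [|[|j]]; try by rewrite big_geq //; lra.
rewrite big_ltn //.
have h1 := pp_le 1; rewrite expr1 in h1.
have h2 := tele j.
have h3 : 0 <= r ^+ j.+2 by rewrite exprn_ge0 // r_ge0.
have h4 := r_le; have h5 := r_ge0.
have h6 : r ^+ 2 <= 1/4 by rewrite expr2; nra.
lra.
Qed.

Lemma ee0 : ee 0 = 0.
Proof. by rewrite /ee /Ssum /= big_seq1 mul0r. Qed.

Lemma ee_rec n : (0 < n)%N -> ee n = 1 + \sum_(1 <= a < n.+1) tterm ee pp n a.
Proof.
move=> hn; rewrite /ee S_rec // natrD mulrDl divff ?pnatr_eq0 -?lt0n ?expn_gt0 ?(ltnW hk) //.
congr (_ + _); rewrite natr_sum mulr_suml; apply: eq_bigr => a _.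
rewrite /tterm; case: leqP => h /=.
  rewrite mul1n mul1r natrM natrD /pp /ee.
  have -> : (k ^ n = k ^ a.*2 * k ^ (n - a.*2))%N by rewrite -expnD subnKC.
  rewrite natrM.
  have hX : (k ^ a.*2)%:R != 0 :> R by rewrite pnatr_eq0 -lt0n expn_gt0 (ltnW hk).
  have hY : (k ^ (n - a.*2))%:R != 0 :> R by rewrite pnatr_eq0 -lt0n expn_gt0 (ltnW hk).
  field; by apply/andP.
by rewrite mul0n !mul0r.
Qed.

Lemma ee_cauchy (eps : R) : 0 < eps -> exists T, forall n, (T <= n)%N -> `|ee T - ee n| < eps.
Proof. exact: (e_cauchy pp_ge0 pp_le_half pp_sum ee0 ee_rec). Qed.

End Real.

Section Final.

Lemma largest_iff (T : eqType) (w : seq T) i : largest_BP_width w i <-> W w = i.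
Proof.
split.
- case=> [[ws [w0 [Hf Hw]]] Hmax]; apply/eqP; rewrite eqn_leq; apply/andP; split.
    have [ws' [w0' [Hf' <-]]] := W_exists w; exact: Hmax.
  rewrite -Hw; exact: W_upper Hf.
- move=> <-; split; [exact: W_exists | move=> ws w0; exact: W_upper].
Qed.

Lemma perm_tuples k n : perm_eq (map val (enum {: n.-tuple 'I_k})) (words k n).
Proof.
apply: uniq_perm; first by rewrite map_inj_uniq ?enum_uniq //; exact: val_inj.
  exact: uniq_words.
move=> s; rewrite mem_words; apply/mapP/idP => [[t _ ->]|Hs].
  by rewrite size_tuple.
by exists (Tuple Hs); rewrite ?mem_enum.
Qed.

Lemma IB_words k n i : IB k n i = \sum_(w <- words k n) (W w == i).
Proof.
rewrite /IB.
have -> : #|[set w : n.-tuple 'I_k | `[< largest_BP_width (tval w) i >]]| =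
          #|[set w : n.-tuple 'I_k | W (tval w) == i]|.
  apply: eq_card => w; rewrite !inE; by apply/asboolP/eqP => /largest_iff.
rewrite -sum1_card big_mkcond /=.
rewrite -(perm_big _ (perm_tuples k n)) big_map.
rewrite -big_enum /=.
by apply: eq_bigr => t _; rewrite inE; case: (_ == _).
Qed.

Lemma sum_IB k n : \sum_(1 <= i < n.+1) i * IB k n i = Ssum k n.
Proof.
under eq_bigr do rewrite IB_words big_distrr /=.
rewrite exchange_big /= /Ssum big_seq [RHS]big_seq; apply: eq_bigr => w.
rewrite mem_words => /eqP Hw.
have Hle := W_le_size w.
case: (posnP (W w)) => H0.
  rewrite H0 big_nat big1 // => i /andP[Hi _].
  by rewrite (_ : (0 == i) = false) ?muln0 //; lia.
rewrite (bigD1_seq (W w)) ?mem_index_iota ?iota_uniq //=; last lia.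
rewrite eqxx muln1 big1 ?addn0 // => i /negbTE; rewrite eq_sym => ->.
by rewrite muln0.
Qed.

Lemma E_ee (R : realType) k n : E_nk (R:=R) k n = ee R k n.
Proof.
rewrite /E_nk /ee -sum_IB natr_sum mulrC; congr (GRing.mul _ _).
by apply: eq_bigr => i _; rewrite natrM.
Qed.

End Final.

Local Open Scope classical_set_scope.
Local Open Scope ring_scope.

Theorem theorem4 (R : realType) (k : nat) (hk : (2 <= k)%N) :
  exists l : R, (fun n : nat => E_nk (R:=R) k n) @ \oo --> l.
Proof.
have H : forall eps : R, 0 < eps ->
    exists T, forall n, (T <= n)%N -> `|E_nk (R:=R) k T - E_nk (R:=R) k n| < eps.
  move=> eps he; have [T HT] := ee_cauchy (R:=R) hk he.
  by exists T => n Hn; rewrite !E_ee; apply: HT.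
have : cvg ((fun n : nat => E_nk (R:=R) k n) @ \oo).
  apply/cauchy_cvgP/cauchy_exP => eps eps0.
  have [T HT] := H eps eps0.
  exists (E_nk (R:=R) k T). exists T => // n Hn; rewrite /ball /=; exact: HT.
by move/cvg_ex => [l Hl]; exists l.
Qed.
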